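(* Let $m,a,b,t\in\mathbb{N}$ with $m\geq 3$, $a\geq 1$, $t\in\{2,\ldots,m-1\}$ and $(t-1)(am+1)<bm+t<t(am+1)$, and let $S=\langle m,\ am+1,\ bm+t\rangle$ (a MANS-semigroup with embedding dimension $3$). Then \[ \mathrm{g}(S)=\frac{qt(t-1)+r(r+1)}{2m}(am+1)+\frac{qt(q-1)+2q(r+1)}{2m}(bm+t)-\frac{m-1}{2}, \] where $q=\left\lfloor\frac{m-1}{t}\right\rfloor$ and $r=(m-1)\bmod t$.
   Context: $\mathbb{N}=\{0,1,2,\ldots\}$. $\langle A\rangle$ is the submonoid of $(\mathbb{N},+)$ generated by $A$; a numerical semigroup is a submonoid of $\mathbb{N}$ with finite complement. $\mathrm{g}(S)=|\mathbb{N}\setminus S|$ is the genus. A MANS-semigroup is a numerical semigroup with $w(1)<\cdots<w(\mathrm{m}(S)-1)$, where $\mathrm{m}(S)$ is the least element of $S\setminus\{0\}$ and $w(i)$ the least element of $S$ congruent to $i$ modulo $\mathrm{m}(S)$. $a\bmod b$ is the remainder of the division of $a$ by $b$. *)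

(* Defs.v *)
From mathcomp Require Import all_boot all_order all_algebra.
Set Implicit Arguments. Unset Strict Implicit. Unset Printing Implicit Defensive.

Definition gen_submonoid (A : seq nat) (x : nat) : Prop :=
  exists c : seq nat, size c = size A /\
    x = \sum_(i < size A) nth 0 c i * nth 0 A i.

Definition has_genus (S : nat -> Prop) (g : nat) : Prop :=
  exists s : seq nat, uniq s /\ (forall x, x \in s <-> ~ S x) /\ size s = g.

(* Main.v *)
Require Import Defs.
From mathcomp Require Import all_boot all_order all_algebra.
From mathcomp Require Import zify ring.
Import GRing.Theory Num.Theory.

Section W.
Variables (t A B : nat).
Definition w n := n %% t * A + n %/ t * B.

Lemma w_mono : 0 < t -> (t-1)*A <= B -> forall n n', n <= n' -> w n <= w n'.
Proof.
move=> t0 hB n n' nn; rewrite /w.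
have hq : n %/ t <= n' %/ t by apply: leq_div2r.
have e1 := divn_eq n t; have e2 := divn_eq n' t.
have r1 := ltn_pmod n t0; have r2 := ltn_pmod n' t0.
move: hq e1 e2 r1 r2 nn.
set q1 := n %/ t; set q2 := n' %/ t; set x1 := n %% t; set x2 := n' %% t.
rewrite leq_eqVlt => /orP [/eqP eq|lt] e1 e2 r1 r2 nn.
  have : x1 <= x2 by nia.
  move=> h; rewrite eq leq_add2r; exact: leq_mul.
have h1 : x1 * A <= (t-1)*A by apply: leq_mul => //; lia.
have h2 : q1.+1 * B <= q2 * B by apply: leq_mul.
nia.
Qed.

Lemma w_le c1 c2 : 0 < t -> B <= t * A -> w (c1 + c2 * t) <= c1 * A + c2 * B.
Proof.
move=> t0 hB; rewrite /w (addnC c1) modnMDl divnMDl //.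
have e := divn_eq c1 t.
have h : c1 %/ t * B <= c1 %/ t * (t * A) by apply: leq_mul.
nia.
Qed.
End W.
Lemma sumn_iotaS (f : nat -> nat) n :
  sumn [seq f i | i <- iota 0 n.+1] = sumn [seq f i | i <- iota 0 n] + f n.
Proof. by rewrite -addn1 iotaD map_cat sumn_cat /= addn0. Qed.

Lemma sumn_lin (f g : nat -> nat) a b s :
  sumn [seq f i * a + g i * b | i <- s] = a * sumn (map f s) + b * sumn (map g s).
Proof. elim: s => [|x s IH] /=; first by rewrite !muln0. rewrite IH; ring. Qed.

Lemma closed_forms t n : 0 < t ->
  2 * sumn [seq i %% t | i <- iota 0 n.+1] = n %/ t * t * (t - 1) + n %% t * (n %% t + 1) /\
  2 * sumn [seq i %/ t | i <- iota 0 n.+1] = n %/ t * t * (n %/ t - 1) + 2 * (n %/ t) * (n %% t + 1).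
Proof.
move=> t0; elim: n => [|n [IH1 IH2]].
  by rewrite /= mod0n div0n.
have h1 := sumn_iotaS (fun i => i %% t) n.+1.
have h2 := sumn_iotaS (fun i => i %/ t) n.+1.
rewrite h1 h2 [2 * (sumn _ + _)]mulnDr IH1 [2 * (sumn _ + _)]mulnDr IH2.

have e := divn_eq n t; have r1 := ltn_pmod n t0.
move: e r1; set q := n %/ t; set r := n %% t => e r1.
clear h1 h2 IH1 IH2; clearbody q r; subst n.
have [lt|eq] : r.+1 < t \/ r.+1 = t by lia.
  have hm : (q * t + r).+1 %% t = r.+1.
    by rewrite -addnS modnMDl modn_small.
  have hd : (q * t + r).+1 %/ t = q.
    by rewrite -addnS divnMDl // divn_small // addn0.
  rewrite hm hd; split; ring.
have hm : (q * t + r).+1 %% t = 0.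
  by rewrite -addnS eq addnC -mulSn modnMl.
have hd : (q * t + r).+1 %/ t = q.+1.
  by rewrite -addnS eq addnC -mulSn mulnK.
rewrite hm hd -eq subSS subn0; case: q {hm hd} => [|q]; rewrite ?subSS ?subn0; split; ring.
Qed.

Lemma w_expand m a b t j : 0 < t ->
  w t (a* m+1) (b* m+t) j = (j %% t * a + j %/ t * b) * m + j.
Proof. move=> t0; rewrite /w {5}(divn_eq j t); ring. Qed.

Lemma memS m a b t x : 0 < m -> 0 < t ->
  (t-1)*(a* m+1) <= b* m+t -> b* m+t <= t*(a* m+1) ->
  gen_submonoid [:: m; a* m+1; b* m+t] x <-> w t (a* m+1) (b* m+t) (x %% m) <= x.
Proof.
move=> m0 t0 h1 h2; split.
  case=> c []; case: c => [|c0 [|c1 [|c2 []]]] //= _.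
  rewrite !big_ord_recl big_ord0 /= => ->.
  have ex : c0 * m + (c1 * (a * m + 1) + (c2 * (b * m + t) + 0)) =
            (c0 + c1 * a + c2 * b) * m + (c1 + c2 * t) by ring.
  rewrite ex modnMDl.
have hh1 := @w_mono _ _ _ t0 h1 _ _ (leq_mod (c1 + c2 * t) m).
  have hh2 := @w_le _ _ _ c1 c2 t0 h2.
  lia.
rewrite w_expand //.
set j := x %% m; set K := j %% t * a + j %/ t * b => h.
have ex := divn_eq x m.
have hK : K <= x %/ m.
  rewrite -(leq_pmul2r m0); lia.
exists [:: x %/ m - K; j %% t; j %/ t]; split => //.
rewrite !big_ord_recl big_ord0 /=.
have ej := divn_eq j t.
rewrite {1}ex -/j.
move: hK ej; rewrite /K.
move: (x %/ m) (j %% t) (j %/ t) => d u v hK ej.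
have [e ->] : exists e, d = e + (u * a + v * b) by exists (d - (u * a + v * b)); rewrite subnK.
rewrite addnK {1}ej; ring.
Qed.

Lemma PQ_id q r t : 0 < t ->
  q * t * (t - 1) + r * (r + 1) + t * (q * t * (q - 1) + 2 * q * (r + 1)) =
  (q * t + r + 1) * (q * t + r).
Proof.
case: t => // t _; case: q => [|q]; rewrite ?subSS ?subn0 /=; ring.
Qed.

Theorem proposition3p13 (m a b t : nat) :
  3 <= m -> 1 <= a -> 2 <= t -> t <= m - 1 ->
  (t - 1) * (a * m + 1) < b * m + t -> b * m + t < t * (a * m + 1) ->
  let q := (m - 1) %/ t in
  let r := (m - 1) %% t in
  exists g : nat, has_genus (gen_submonoid [:: m; a * m + 1; b * m + t]) g /\
    (g%:R : rat) =
      (((q * t * (t - 1) + r * (r + 1))%N%:R / (2 * m)%N%:R) * (a * m + 1)%N%:R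
      + ((q * t * (q - 1) + 2 * q * (r + 1))%N%:R / (2 * m)%N%:R) * (b * m + t)%N%:R
      - ((m - 1)%N%:R / 2%:R))%R.
Proof.
move=> hm ha ht htm hlo hhi q r.
have m0 : 0 < m by lia.
have t0 : 0 < t by lia.
have h1 := ltnW hlo; have h2 := ltnW hhi.
pose K i := i %% t * a + i %/ t * b.
pose s := [seq i + k * m | i <- iota 0 m, k <- iota 0 (K i)].
exists (sumn [seq K i | i <- iota 0 m]); split.
  exists s; split; last split.
  - apply: allpairs_uniq_dep; first exact: iota_uniq.
      by move=> i _; exact: iota_uniq.
    move=> [i1 k1] [i2 k2] H1 H2 /= e.
    have lt1 : i1 < m.
      case/allpairsPdep: H1 => x [y [hx _ E]].
      have /= -> := congr1 tag E; by rewrite mem_iota in hx.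
    have lt2 : i2 < m.
      case/allpairsPdep: H2 => x [y [hx _ E]].
      have /= -> := congr1 tag E; by rewrite mem_iota in hx.
    have ei : i1 = i2.
      have := congr1 (modn^~ m) e => /=.
      by rewrite !(addnC _ (_ * m)) !modnMDl !modn_small.
    subst i2; have : k1 = k2 by nia.
    by move=> ->.
  - move=> x; rewrite memS // w_expand // -/(K (x %% m)).
    have ex := divn_eq x m.
    have xr := ltn_pmod x m0.
    split.
      case/allpairsPdep => i [k [hi hk ->]].
      rewrite mem_iota in hi; rewrite mem_iota in hk.
      have -> : (i + k * m) %% m = i by rewrite addnC modnMDl modn_small //; lia.
      nia.
    move=> hn; apply/allpairsPdep; exists (x %% m), (x %/ m).
    rewrite !mem_iota; split; try lia.
    rewrite add0n ltnNge; apply/negP => hle; apply: hn.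
    have := leq_mul hle (leqnn m); lia.
  - rewrite size_allpairs_dep; congr sumn; apply: eq_map => i; exact: size_iota.
have [c1 c2] := @closed_forms t (m - 1) t0.
have em : (m - 1).+1 = m by lia.
rewrite em -/q -/r in c1 c2.
have eg : sumn [seq K i | i <- iota 0 m] =
  a * sumn [seq i %% t | i <- iota 0 m] + b * sumn [seq i %/ t | i <- iota 0 m].
  exact: sumn_lin.
move: eg c1 c2.
move: (sumn [seq K i | i <- iota 0 m]) (sumn [seq i %% t | i <- iota 0 m])
  (sumn [seq i %/ t | i <- iota 0 m]) => g X Y eg c1 c2.
have emr : m - 1 = q * t + r by rewrite /q /r -divn_eq.
set P := q * t * (t - 1) + r * (r + 1).
set Q := q * t * (q - 1) + 2 * q * (r + 1).
have PQ : P + t * Q = m * (m - 1).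
  rewrite /P /Q emr.
  have -> : m = q * t + r + 1 by lia.
  exact: PQ_id.
have N : 2 * m * g + m * (m - 1) = P * (a * m + 1) + Q * (b * m + t).
  rewrite -PQ eg /P /Q -c1 -c2; ring.
have Nr : (((2 * m * g + m * (m - 1))%N%:R : rat) = (P * (a * m + 1) + Q * (b * m + t))%N%:R)%R.
  by rewrite N.
rewrite !natrD !natrM in Nr.
have mr : ((m%:R : rat) != 0)%R by rewrite pnatr_eq0 -lt0n.
rewrite natrM.
have -> : ((g%:R : rat) = ((P%:R * (a * m + 1)%:R + Q%:R * (b * m + t)%:R) - m%:R * (m - 1)%:R) / (2 * m%:R) :> rat)%R.
  rewrite -Nr; field; by rewrite mr.
field; by rewrite mr.
Qed.
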